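(* Let $U$ be a unitary on a finite-dimensional Hilbert space $\mathcal{H}$ and consider a verification protocol for $U$ with set of test states $\mathscr{T}=\{|\psi_j\rangle\}_j$ and effective set $\mathscr{T}_{\mathrm{eff}}$. (i) If $U$ can be verified reliably by this protocol, then $\mathscr{T}$ is an identification set for $U$. (ii) If $\mathscr{T}_{\mathrm{eff}}$ is an identification set for $U$, then $U$ can be verified reliably by this protocol. (iii) If the protocol is ordinary, then $U$ can be verified reliably by it if and only if $\mathscr{T}$ is an identification set for $U$.
   Context: A verification protocol for $U$ consists of a finite set $\mathscr{T}=\{|\psi_j\rangle\}$ of pure test states, each chosen with probability $p_j>0$, and for each $j$ a verification operator $\Omega_j=\sum_lq_{jl}E_{jl}$ for the output state $U|\psi_j\rangle$, where each $E_{jl}$ satisfies $0\le E_{jl}\le I$ and $E_{jl}U|\psi_j\rangle=U|\psi_j\rangle$, and $q_{jl}>0$ sum to 1. A quantum channel $\Lambda$ passes test $j$ with probability $\mathrm{tr}[\Omega_j\Lambda(|\psi_j\rangle\langle\psi_j|)]$. $U$ is verified reliably if the unitary channel $\rho\mapsto U\rho U^\dagger$ is the only quantum channel on $\mathcal{H}$ passing every test with certainty. Let $\nu_j=1-\beta(\Omega_j)$, where $\beta(\Omega_j)$ is the second largest eigenvalue of $\Omega_j$; $|\psi_j\rangle$ is effective if $\nu_j>0$, $\mathscr{T}_{\mathrm{eff}}$ is the set of effective test states, and the protocol is ordinary if all $\nu_j>0$. A set $\mathscr{S}$ of pure states is an identification set for $U$ if every quantum channel $\Lambda$ with $\Lambda(|\psi\rangle\langle\psi|)=U|\psi\rangle\langle\psi|U^\dagger$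 for all $|\psi\rangle\in\mathscr{S}$ satisfies $\Lambda(\rho)=U\rho U^\dagger$ for all density operators $\rho$ on $\mathcal{H}$. *)

(* Defs.v *)
(* matrices over an arbitrary numClosedFieldType C (e.g. algC,
   or complex R for R : rcfType), playing the role of the complex field. *)
From HB Require Import structures.
From mathcomp Require Import all_boot all_order all_algebra.
Set Implicit Arguments. Unset Strict Implicit. Unset Printing Implicit Defensive.
Import Order.TTheory GRing.Theory Num.Theory.
Local Open Scope ring_scope.
Local Open Scope sesquilinear_scope.

Section QDefs.
Variable C : numClosedFieldType.
Variable n : nat.

(* positive semidefinite: <v, A v> >= 0 for all v (this forces Hermiticity over C) *)
Definition psdmx (A : 'M[C]_n) : Prop :=
  forall v : 'cV[C]_n, 0 <= (v ^t* *m A *m v) 0 0.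

Definition density (rho : 'M[C]_n) : Prop := psdmx rho /\ \tr rho = 1.

Definition pure_state (psi : 'cV[C]_n) : Prop := psi ^t* *m psi = 1.
Definition proj (psi : 'cV[C]_n) : 'M[C]_n := psi *m psi ^t*.

(* quantum channel on L(H): completely positive trace-preserving map,
   given in operator-sum (Kraus) form *)
Definition quantum_channel (Lam : 'M[C]_n -> 'M[C]_n) : Prop :=
  exists (k : nat) (K : 'I_k -> 'M[C]_n),
    \sum_(i < k) (K i) ^t* *m K i = 1%:M /\
    forall rho : 'M[C]_n, Lam rho = \sum_(i < k) K i *m rho *m (K i) ^t*.

Definition unitary_channel (U : 'M[C]_n) (rho : 'M[C]_n) : 'M[C]_n :=
  U *m rho *m U ^t*.

(* eigenvalues (with multiplicity) of a normal matrix, sorted in decreasing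
   order; beta = second largest eigenvalue (0 if n < 2) *)
Definition eigs_desc (A : 'M[C]_n) : seq C :=
  sort (fun x y : C => y <= x) [seq spectral_diag A 0 i | i <- enum 'I_n].
Definition beta (A : 'M[C]_n) : C := nth 0 (eigs_desc A) 1.
Definition nu (A : 'M[C]_n) : C := 1 - beta A.

Definition identification_set (U : 'M[C]_n) (S : 'cV[C]_n -> Prop) : Prop :=
  forall Lam, quantum_channel Lam ->
    (forall psi, S psi -> Lam (proj psi) = unitary_channel U (proj psi)) ->
    forall rho, density rho -> Lam rho = unitary_channel U rho.

Definition Omega (m : nat) (L : 'I_m -> nat)
  (q : forall j, 'I_(L j) -> C) (E : forall j, 'I_(L j) -> 'M[C]_n)
  (j : 'I_m) : 'M[C]_n := \sum_(l < L j) q j l *: E j l.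

Definition verification_protocol (U : 'M[C]_n) (m : nat)
  (psi : 'I_m -> 'cV[C]_n) (p : 'I_m -> C) (L : 'I_m -> nat)
  (q : forall j, 'I_(L j) -> C) (E : forall j, 'I_(L j) -> 'M[C]_n) : Prop :=
  (forall j, pure_state (psi j)) /\
  (forall j, 0 < p j) /\
  (\sum_(j < m) p j = 1) /\
  (forall j l, psdmx (E j l) /\ psdmx (1%:M - E j l)) /\
  (forall j l, E j l *m (U *m psi j) = U *m psi j) /\
  (forall j l, 0 < q j l) /\
  (forall j, \sum_(l < L j) q j l = 1).

Definition passes_all (m : nat) (psi : 'I_m -> 'cV[C]_n) (Om : 'I_m -> 'M[C]_n)
  (Lam : 'M[C]_n -> 'M[C]_n) : Prop :=
  forall j, \tr (Om j *m Lam (proj (psi j))) = 1.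

Definition verified_reliably (U : 'M[C]_n) (m : nat) (psi : 'I_m -> 'cV[C]_n)
  (Om : 'I_m -> 'M[C]_n) : Prop :=
  passes_all psi Om (unitary_channel U) /\
  forall Lam, quantum_channel Lam -> passes_all psi Om Lam ->
    forall rho : 'M[C]_n, Lam rho = unitary_channel U rho.

Definition test_set (m : nat) (psi : 'I_m -> 'cV[C]_n) : 'cV[C]_n -> Prop :=
  fun phi => exists j, phi = psi j.
Definition eff_test_set (m : nat) (psi : 'I_m -> 'cV[C]_n)
  (Om : 'I_m -> 'M[C]_n) : 'cV[C]_n -> Prop :=
  fun phi => exists j, phi = psi j /\ 0 < nu (Om j).
Definition ordinary (m : nat) (Om : 'I_m -> 'M[C]_n) : Prop :=
  forall j, 0 < nu (Om j).

End QDefs.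

(* Main.v *)
Require Import Defs.
From mathcomp Require Import all_boot all_order all_algebra.
Import Order.TTheory GRing.Theory Num.Theory.
Local Open Scope ring_scope.
Local Open Scope sesquilinear_scope.

Lemma tmul (C : numClosedFieldType) a b c (A : 'M[C]_(a,b)) (B : 'M[C]_(b,c)) :
  (A *m B)^t* = B^t* *m A^t*.
Proof. by rewrite trmx_mul map_mxM. Qed.

Lemma cnorm (C : numClosedFieldType) n (v : 'cV[C]_n) :
  (v^t* *m v) 0 0 = \sum_k `|v k 0| ^+ 2.
Proof. rewrite !mxE; apply: eq_bigr => k _; by rewrite !mxE normCK mulrC. Qed.

Lemma cnorm_ge0 (C : numClosedFieldType) n (v : 'cV[C]_n) : 0 <= (v^t* *m v) 0 0.
Proof. by rewrite cnorm; apply: sumr_ge0 => k _; rewrite exprn_ge0. Qed.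

Lemma cnorm_eq0 (C : numClosedFieldType) n (v : 'cV[C]_n) :
  (v^t* *m v) 0 0 = 0 -> v = 0.
Proof.
rewrite cnorm => /eqP; rewrite psumr_eq0 => [/allP H|k _]; last by rewrite exprn_ge0.
apply/matrixP => i j; rewrite ord1 mxE.
have := H i (mem_index_enum _); rewrite /= sqrf_eq0 normr_eq0 => /eqP //.
Qed.

Lemma tr11 (C : numClosedFieldType) (A : 'M[C]_1) : \tr A = A 0 0.
Proof. by rewrite /mxtrace big_ord1. Qed.

Lemma conj_delta (C : numClosedFieldType) n (i : 'I_n) :
  (delta_mx i 0 : 'cV[C]_n)^t* = delta_mx 0 i.
Proof. apply/matrixP => a b; rewrite !mxE; by case: eqP; case: eqP => //= _ _; rewrite ?conjC1 ?conjC0. Qed.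

Lemma quad_delta (C : numClosedFieldType) n (M : 'M[C]_n) (i j : 'I_n) :
  ((delta_mx i 0 : 'cV[C]_n)^t* *m M *m (delta_mx j 0 : 'cV[C]_n)) 0 0 = M i j.
Proof. by rewrite conj_delta -rowE -colE !mxE. Qed.

Lemma tadd (C : numClosedFieldType) a b (A B : 'M[C]_(a,b)) : (A + B)^t* = A^t* + B^t*.
Proof. by rewrite raddfD /= map_mxD. Qed.
Lemma tscale (C : numClosedFieldType) a b c (A : 'M[C]_(a,b)) : (c *: A)^t* = c^* *: A^t*.
Proof. by rewrite linearZ /= map_mxZ. Qed.

Lemma expand (C : numClosedFieldType) n (u v : 'cV[C]_n) a :
  (u + a *: v) *m (u + a *: v)^t* = u *m u^t* + a^* *: (u *m v^t*) + a *: (v *m u^t*) + (a * a^*) *: (v *m v^t*).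
Proof.
rewrite tadd tscale mulmxDl !mulmxDr -!scalemxAl -!scalemxAr scalerA.
by rewrite !addrA.
Qed.

Lemma polar (C : numClosedFieldType) n a b (f : 'M[C]_n -> 'M[C]_(a,b))
  (fD : forall A B, f (A+B) = f A + f B) (fZ : forall c A, f (c *: A) = c *: f A)
  (H : forall v : 'cV[C]_n, f (v *m v^t*) = 0) (u v : 'cV[C]_n) : f (u *m v^t*) = 0.
Proof.
have h1 := H (u + 1 *: v); have hi := H (u + 'i *: v).
rewrite expand !fD !fZ !H in h1; rewrite expand !fD !fZ !H in hi.
rewrite !scaler0 !addr0 add0r conjC1 !scale1r in h1.
rewrite !scaler0 !addr0 add0r conjCi in hi.
move/eqP: h1; rewrite addr_eq0 => /eqP h1; rewrite h1 scaleNr scalerN opprK in hi.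
rewrite h1; move/eqP: hi; rewrite -scalerDl scaler_eq0 => /orP[|/eqP ->]; last by rewrite oppr0.
by rewrite -mulr2n mulrn_eq0 /= (negbTE (neq0Ci _)).
Qed.

Lemma tr_quad (C : numClosedFieldType) n (B : 'M[C]_n) (u v : 'cV[C]_n) :
  \tr (B *m (u *m v^t*)) = (v^t* *m B *m u) 0 0.
Proof. by rewrite mulmxA mxtrace_mulC mulmxA tr11. Qed.

Lemma psd_herm (C : numClosedFieldType) n (A : 'M[C]_n) : psdmx A -> A^t* = A.
Proof.
move=> HA; set B := A - A^t*.
pose f (M : 'M[C]_n) : 'M[C]_1 := (\tr (B *m M))%:M.
have fD : forall M N, f (M + N) = f M + f N.
  by move=> M N; rewrite /f mulmxDr mxtraceD raddfD.
have fZ : forall c M, f (c *: M) = c *: f M.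
  by move=> c M; rewrite /f -scalemxAr mxtraceZ scale_scalar_mx.
have H : forall v : 'cV[C]_n, f (v *m v^t*) = 0.
  move=> v; rewrite /f tr_quad /B mulmxBr mulmxBl mxE.
  have -> : (v^t* *m A^t* *m v) = (v^t* *m A *m v)^t*.
    by rewrite !tmul trmxCK mulmxA.
  have hq : 0 <= (v^t* *m A *m v) 0 0 := HA v.
  move: hq; set q := (v^t* *m A *m v) => hq.
  have E : (- q^t*) 0 0 = - q 0 0.
    by rewrite mxE [q^t* 0 0]mxE [q^T 0 0]mxE geC0_conj.
  by rewrite E subrr; apply/matrixP => a b; rewrite !mxE mul0rn.
suff HB: B = 0 by move/eqP: HB; rewrite /B subr_eq0 => /eqP.
apply/matrixP => i j.
have := @polar _ _ _ _ f fD fZ H (delta_mx j 0) (delta_mx i 0).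
rewrite /f tr_quad quad_delta => /matrixP /(_ 0 0).
by rewrite !mxE /= mulr1n => ->.
Qed.

Lemma mx11_mul (C : numClosedFieldType) (a b : 'M[C]_1) : (a *m b) 0 0 = a 0 0 * b 0 0.
Proof. by rewrite mxE big_ord1. Qed.

Lemma ext_density (C : numClosedFieldType) n (g h : 'M[C]_n -> 'M[C]_n)
  (gD : forall A B, g (A + B) = g A + g B) (gZ : forall c A, g (c *: A) = c *: g A)
  (hD : forall A B, h (A + B) = h A + h B) (hZ : forall c A, h (c *: A) = c *: h A)
  (H : forall d, density d -> g d = h d) : forall A, g A = h A.
Proof.
pose f (M : 'M[C]_n) : 'M[C]_n := g M - h M.
have fD : forall M N, f (M + N) = f M + f N.
  by move=> M N; rewrite /f gD hD opprD addrACA; reflexivity.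
have fZ : forall c M, f (c *: M) = c *: f M.
  by move=> c M; rewrite /f gZ hZ scalerBr; reflexivity.
have f0 : f 0 = 0.
  by rewrite -(scale0r (0 : 'M[C]_n)) fZ !scale0r.
have Hv : forall v : 'cV[C]_n, f (v *m v^t*) = 0.
  move=> v; set c := (v^t* *m v) 0 0.
  have [c0|cn0] := eqVneq c 0.
    by rewrite (@cnorm_eq0 _ _ v c0) mul0mx.
  have dd : density (c^-1 *: (v *m v^t*)).
    split; last by rewrite mxtraceZ mxtrace_mulC tr11 mulVf.
    move=> w; rewrite -scalemxAr -scalemxAl mxE mulr_ge0 //.
      by rewrite invr_ge0 cnorm_ge0.
    rewrite !mulmxA -(mulmxA (w^t* *m v)) mx11_mul.
    have -> : (v^t* *m w) = (w^t* *m v)^t* by rewrite tmul trmxCK.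
    by rewrite [_^t* 0 0]mxE [_^T 0 0]mxE -normCK exprn_ge0.
  have -> : v *m v^t* = c *: (c^-1 *: (v *m v^t*)) by rewrite scalerA mulfV // scale1r.
  by rewrite fZ /f H // subrr scaler0.
have Huv := @polar _ _ _ _ f fD fZ Hv.
move=> A; apply/eqP; rewrite -subr_eq0; apply/eqP; change (f A = 0).
rewrite [A]matrix_sum_delta.
apply: (big_ind (fun M => f M = 0)) => //; first by move=> x y hx hy; rewrite fD hx hy addr0.
move=> i _; apply: (big_ind (fun M => f M = 0)) => //; first by move=> x y hx hy; rewrite fD hx hy addr0.
move=> j _; rewrite fZ -(mul_delta_mx (0 : 'I_1)) -conj_delta Huv scaler0 //.
Qed.

Lemma uniq_one (C : numClosedFieldType) n (d : 'rV[C]_n)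
  (dle : forall k, d 0 k <= 1)
  (Hb : nth 0 (sort (fun x y : C => y <= x) [seq d 0 i | i <- enum 'I_n]) 1 < 1) :
  forall k k', d 0 k = 1 -> d 0 k' = 1 -> k = k'.
Proof.
move=> k k' hk hk'; apply/eqP; apply/negPn/negP => nkk.
set leT := (fun x y : C => y <= x).
set s0 := [seq d 0 i | i <- enum 'I_n].
have c0 : (1 < count (pred1 (1%R : C)) s0)%N.
  have : (1 < #|[pred i : 'I_n | d 0%R i == 1%R]|)%N.
    by apply/card_gt1P; exists k, k'; rewrite !inE hk hk' eqxx.
  by rewrite cardE size_filter /s0 count_map enumT; apply.
have cs : count (pred1 (1%R : C)) (sort leT s0) = count (pred1 (1%R : C)) s0.
  by apply/permP; rewrite perm_sort.
have srt : sorted leT (sort leT s0).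
  apply: (@sort_sorted_in _ [pred x : C | x \is Num.real]).
    by move=> x y xr yr; rewrite /leT orbC real_leVge.
  by apply/allP => x /mapP [i _ ->]; rewrite inE ler1_real.
have alle : all (fun x => x <= 1) (sort leT s0).
  by apply/allP => x; rewrite mem_sort => /mapP [i _ ->].
move: Hb c0 srt alle; rewrite -cs; case: (sort leT s0) => [|x0 [|x1 r]] //=.
  by case: (x0 == 1%R).
move=> Hb c0 /andP [_ pr] alle.
have tr : transitive leT by move=> a b c hab hbc; rewrite /leT; exact: le_trans hbc hab.
have /allP al := order_path_min tr pr.
have e0 : count (pred1 (1%R : C)) r = 0%N.
  rewrite (@eq_in_count _ _ pred0) ?count_pred0 // => y /al; rewrite /leT /= => yle.
  by rewrite lt_eqF // (le_lt_trans yle Hb).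
move: c0; rewrite e0 /= (lt_eqF Hb) addn0.
by case: (x0 == 1%R).
Qed.

Lemma diag_quad (C : numClosedFieldType) n (y : 'cV[C]_n) (e : 'rV[C]_n) :
  (y^t* *m diag_mx e *m y) 0 0 = \sum_k e 0 k * `|y k 0| ^+ 2.
Proof.
rewrite mxE; apply: eq_bigr => k _; rewrite mul_mx_diag !mxE normCK.
by rewrite mulrAC mulrC [_^* * _]mulrC.
Qed.

Lemma key (C : numClosedFieldType) n (Om : 'M[C]_n) (phi w : 'cV[C]_n)
  (Hh : Om^t* = Om) (Hpsd : psdmx (1%:M - Om)) (Hphi : phi^t* *m phi = 1%:M)
  (Hfix : Om *m phi = phi) (Hnu : 0 < nu Om)
  (Hw : (w^t* *m (1%:M - Om) *m w) 0 0 = 0) :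
  w = (phi^t* *m w) 0 0 *: phi.
Proof.
set P := spectralmx Om; set d := spectral_diag Om.
have Pu : P \is unitarymx := spectral_unitarymx Om.
have PPt : P *m P^t* = 1%:M by apply/unitarymxP.
have PtP : P^t* *m P = 1%:M by rewrite -[P^t* *m P]mul1mx mulmxA mulmxKtV.
have Onorm : Om \is normalmx by rewrite qualifE Hh.
have Odec : Om = P^t* *m diag_mx d *m P.
  by rewrite -invmx_unitary //; apply/orthomx_spectralP.
have PDP : P *m (1%:M - Om) *m P^t* = diag_mx (\row_k (1 - d 0 k)).
  rewrite mulmxBr mulmxBl mulmx1 PPt Odec !mulmxA PPt mul1mx -mulmxA PPt mulmx1.
  by apply/matrixP => i j; rewrite !mxE; case: eqP => _; rewrite ?mulr1n ?mulr0n ?subr0.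
have Q : forall x : 'cV[C]_n, (x^t* *m (1%:M - Om) *m x) 0 0 = \sum_k (1 - d 0 k) * `|(P *m x) k 0| ^+ 2.
  move=> x.
  have -> : x^t* *m (1%:M - Om) *m x = (P *m x)^t* *m diag_mx (\row_k (1 - d 0 k)) *m (P *m x).
    rewrite -PDP tmul !mulmxA -(mulmxA (x^t*) (P^t*) P) PtP mulmx1.
    by rewrite -(mulmxA _ (P^t*) P) PtP mulmx1.
  by rewrite diag_quad; apply: eq_bigr => k _; rewrite mxE.
have dle : forall k, 0 <= 1 - d 0 k.
  move=> k; have := Hpsd (P^t* *m delta_mx k 0); rewrite Q mulmxA PPt mul1mx.
  rewrite (bigD1 k) //= big1 ?addr0.
    by rewrite mxE !eqxx /= normr1 expr1n mulr1.
  by move=> j /negbTE nj; rewrite mxE nj /= normr0 expr0n /= mulr0.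
have dle1 : forall k, d 0 k <= 1 by move=> k; rewrite -subr_ge0.
have Hb : nth 0 (sort (fun x y : C => y <= x) [seq d 0 i | i <- enum 'I_n]) 1 < 1.
  by move: Hnu; rewrite /nu subr_gt0.
have U1 := @uniq_one _ _ d dle1 Hb.
set u := P *m w; set f := P *m phi.
have hu : forall k, d 0 k != 1 -> u k 0 = 0.
  move=> k hk; move: Hw; rewrite Q => /eqP; rewrite psumr_eq0; last first.
    by move=> j _; rewrite mulr_ge0 // exprn_ge0.
  move/allP/(_ k (mem_index_enum _)); rewrite /= mulf_eq0 subr_eq0 eq_sym (negbTE hk) /=.
  by rewrite sqrf_eq0 normr_eq0 => /eqP.
have hf : forall k, d 0 k != 1 -> f k 0 = 0.
  move=> k hk.
  have Df : diag_mx d *m f = f.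
    have POm : P *m Om = diag_mx d *m P by rewrite Odec !mulmxA PPt mul1mx.
    by rewrite /f mulmxA -POm -mulmxA Hfix.
  move/matrixP: Df => /(_ k 0); rewrite mul_diag_mx => /eqP.
  rewrite mxE -subr_eq0 -{2}[f k 0]mul1r -mulrBl mulf_eq0 subr_eq0 (negbTE hk) /= => /eqP //.
have fn : \sum_k `|f k 0| ^+ 2 = 1.
  by rewrite -cnorm /f tmul mulmxA -(mulmxA _ (P^t*)) PtP mulmx1 Hphi mxE.
have aE : (phi^t* *m w) 0 0 = \sum_k (f k 0)^* * u k 0.
  rewrite -[w]mul1mx -PtP -mulmxA -/u mulmxA -tmul -/f mxE.
  by apply: eq_bigr => k _; rewrite !mxE.
suff E : u = (phi^t* *m w) 0 0 *: f.
  have := congr1 (mulmx (P^t*)) E; rewrite /u /f -scalemxAr !mulmxA PtP !mul1mx //.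
apply/matrixP => k j0; rewrite ord1 [in RHS]mxE.
have [hk|hk] := eqVneq (d 0 k) 1; last by rewrite hu // hf // mulr0.
have oth : forall j, j != k -> d 0 j != 1.
  by move=> j njk; apply/eqP => hj; move/eqP: njk; apply; apply: U1.
rewrite aE (bigD1 k) //= big1 ?addr0; last by move=> j /oth /hf ->; rewrite conjC0 mul0r.
move: fn; rewrite (bigD1 k) //= big1 ?addr0; last by move=> j /oth /hf ->; rewrite normr0 expr0n.
by rewrite normCK => fk; rewrite mulrC mulrA fk mul1r.
Qed.

Lemma pass_core (C : numClosedFieldType) n (Om : 'M[C]_n) (phi : 'cV[C]_n) k
  (w : 'I_k -> 'cV[C]_n)
  (Hh : Om^t* = Om) (Hpsd : psdmx (1%:M - Om)) (Hphi : phi^t* *m phi = 1%:M)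
  (Hfix : Om *m phi = phi) (Hnu : 0 < nu Om)
  (Hsum1 : \sum_i ((w i)^t* *m w i) 0 0 = 1)
  (Htr : \tr (Om *m \sum_i w i *m (w i)^t*) = 1) :
  \sum_i w i *m (w i)^t* = phi *m phi^t*.
Proof.
have Hq : forall i, ((w i)^t* *m (1%:M - Om) *m w i) 0 0 = 0.
  have tot : \sum_i ((w i)^t* *m (1%:M - Om) *m w i) 0 0 = 0.
    under eq_bigr do rewrite mulmxBr mulmx1 mulmxBl mxE.
    under eq_bigr do rewrite [X in _ + X]mxE.
    rewrite sumrB Hsum1.
    have -> : \sum_i ((w i)^t* *m Om *m w i) 0 0 = 1.
      rewrite -Htr mulmx_sumr raddf_sum /=.
      by apply: eq_bigr => i _; rewrite tr_quad.
    by rewrite subrr.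
  move=> i; move/eqP: tot; rewrite psumr_eq0 => [/allP /(_ i (mem_index_enum _)) /eqP //|j _].
  exact: Hpsd.
set a := fun i => (phi^t* *m w i) 0 0.
have Ha : forall i, w i = a i *: phi by move=> i; exact: (@key _ _ Om phi (w i) Hh Hpsd Hphi Hfix Hnu (Hq i)).
have Hsa : \sum_i a i * (a i)^* = 1.
  rewrite -Hsum1; apply: eq_bigr => i _.
  rewrite {1 2}(Ha i) tscale -scalemxAl -scalemxAr Hphi !mxE eqxx mulr1n mulr1.
  by rewrite mulrC.
under eq_bigr do rewrite (Ha _) tscale -scalemxAl -scalemxAr scalerA.
by rewrite -scaler_suml Hsa scale1r.
Qed.

Lemma psd_sum (C : numClosedFieldType) n k (c : 'I_k -> C) (M : 'I_k -> 'M[C]_n)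
  (hc : forall l, 0 <= c l) (hM : forall l, psdmx (M l)) : psdmx (\sum_l c l *: M l).
Proof.
move=> v; rewrite mulmx_sumr mulmx_suml summxE; apply: sumr_ge0 => l _.
by rewrite -scalemxAr -scalemxAl mxE mulr_ge0 // hM.
Qed.

Lemma tsum (C : numClosedFieldType) a b k (M : 'I_k -> 'M[C]_(a,b)) :
  (\sum_l M l)^t* = \sum_l (M l)^t*.
Proof.
apply: (big_morph (fun X : 'M[C]_(a,b) => X^t*)) => [X Y|]; first exact: tadd.
by rewrite trmx0 map_mx0.
Qed.

Theorem lemma1 (C : numClosedFieldType) (n : nat) (U : 'M[C]_n)
  (m : nat) (psi : 'I_m -> 'cV[C]_n) (p : 'I_m -> C) (L : 'I_m -> nat)
  (q : forall j, 'I_(L j) -> C) (E : forall j, 'I_(L j) -> 'M[C]_n) :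
  U \is unitarymx ->
  verification_protocol U psi p q E ->
  let Om := Omega q E in
  [/\ (verified_reliably U psi Om -> identification_set U (test_set psi)),
      (identification_set U (eff_test_set psi Om) -> verified_reliably U psi Om) &
      (ordinary Om ->
        (verified_reliably U psi Om <-> identification_set U (test_set psi)))].
Proof.
move=> HU [Hpure [Hp [Hpsum [HE [Hfix [Hq Hqsum]]]]]] Om.
have UtU : U^t* *m U = 1%:M by rewrite -[U^t* *m U]mul1mx mulmxA mulmxKtV.
have OmFix : forall j, Om j *m (U *m psi j) = U *m psi j.
  move=> j; rewrite /Om /Omega mulmx_suml.
  under eq_bigr do rewrite -scalemxAl Hfix.
  by rewrite -scaler_suml Hqsum scale1r.
have OmH : forall j, (Om j)^t* = Om j.
  move=> j; rewrite /Om /Omega tsum; apply: eq_bigr => l _.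
  rewrite tscale psd_herm; last by case: (HE j l).
  by rewrite geC0_conj // (ltW (Hq j l)).
have psdI : forall j, psdmx (1%:M - Om j).
  move=> j; have -> : 1%:M - Om j = \sum_l q j l *: (1%:M - E j l).
    rewrite /Om /Omega; under [in RHS]eq_bigr do rewrite scalerBr.
    by rewrite sumrB -scaler_suml Hqsum scale1r.
  apply: psd_sum => l; first exact: (ltW (Hq j l)).
  by case: (HE j l).
have phin : forall j, (U *m psi j)^t* *m (U *m psi j) = 1%:M.
  by move=> j; rewrite tmul mulmxA -(mulmxA _ (U^t*)) UtU mulmx1 Hpure.
have uproj : forall j, unitary_channel U (proj (psi j)) = (U *m psi j) *m (U *m psi j)^t*.
  by move=> j; rewrite /unitary_channel /proj tmul !mulmxA.
have passU : passes_all psi Om (unitary_channel U).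
  move=> j; rewrite uproj mulmxA OmFix mxtrace_mulC phin mxtrace1.
  by [].
have partI : verified_reliably U psi Om -> identification_set U (test_set psi).
  move=> [_ Hrel] Lam HL Hag rho _; apply: Hrel => // j.
  by rewrite Hag; [exact: passU | exists j].
have partII : identification_set U (eff_test_set psi Om) -> verified_reliably U psi Om.
  move=> Hid; split => // Lam HL Hpass.
  have [k [K [Ksum HK]]] := HL.
  apply: ext_density.
  - by move=> A B; rewrite !HK -big_split; apply: eq_bigr => i _; rewrite mulmxDr mulmxDl.
  - by move=> c A; rewrite !HK scaler_sumr; apply: eq_bigr => i _; rewrite -scalemxAr -scalemxAl.
  - by move=> A B; rewrite /unitary_channel mulmxDr mulmxDl.
  - by move=> c A; rewrite /unitary_channel -scalemxAr -scalemxAl.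
  move=> d Hd; apply: (Hid Lam HL _ d Hd) => phi [j [-> Hnuj]].
  have KE : forall i, K i *m (psi j *m (psi j)^t*) *m (K i)^t* = (K i *m psi j) *m (K i *m psi j)^t*.
    by move=> i; rewrite tmul !mulmxA.
  rewrite HK uproj /proj; under eq_bigr do rewrite KE.
  apply: (@pass_core _ _ (Om j) (U *m psi j) k (fun i => K i *m psi j) (OmH j) (psdI j) (phin j) (OmFix j) Hnuj).
    rewrite -summxE.
    have -> : \sum_i (K i *m psi j)^t* *m (K i *m psi j) = (psi j)^t* *m (\sum_i (K i)^t* *m K i) *m psi j.
      by rewrite mulmx_sumr mulmx_suml; apply: eq_bigr => i _; rewrite tmul !mulmxA.
    by rewrite Ksum mulmx1 Hpure mxE eqxx.
  have := Hpass j; rewrite HK /proj.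
  by under eq_bigr do rewrite KE.
split => //.
move=> Hord; split; first exact: partI.
move=> Hid; apply: partII => Lam HL Hag; apply: Hid => // phi [j ->]; apply: Hag.
by exists j; split => //; exact: Hord.
Qed.
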